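(* Let $D,\ell,\beta>0$. For $a>0$ put $\omega_N=\frac{\sqrt{a\beta}}2$, $\xi=\frac{D\ell}{4}\sqrt{\beta/a}$. (i) If $D^2\ell\beta<8$ and $a=\frac{4}{D^2\beta}$, and $c=\frac{e^{D\omega_N\xi}}{\cos(D\omega_N\sqrt{1-\xi^2})-\frac{\xi}{\sqrt{1-\xi^2}}\sin(D\omega_N\sqrt{1-\xi^2})}$, then $$a\ge\frac{\ell}{2}\quad\text{and}\quad c\le\frac{2e}{(1-\frac{D^2\ell\beta}{8})^2}.$$ (ii) If $a=\frac{D^2\ell^2\beta}{16}(1-\tanh^2(\frac{D^2\ell\beta}{8}))$ and $c=\frac{e^{D\omega_N\xi}}{\cosh(D\omega_N\sqrt{\xi^2-1})-\frac{\xi}{\sqrt{\xi^2-1}}\sinh(D\omega_N\sqrt{\xi^2-1})}$, then $$a\ge\frac{D^2\ell^2\beta}{16}\exp\Big(-\frac{D^2\ell\beta}{4}\Big)\quad\text{and}\quad c\le\frac{4}{D^2\ell\beta}\exp\Big(\frac{D^2\ell\beta}{2}\Big).$$ *)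

(* Defs.v *)
From Stdlib Require Export Reals.
Open Scope R_scope.

Definition omegaN (a beta : R) : R := sqrt (a * beta) / 2.
Definition xi (D l beta a : R) : R := D * l / 4 * sqrt (beta / a).

Definition c_under (D l beta a : R) : R :=
  let w := omegaN a beta in
  let z := xi D l beta a in
  exp (D * w * z) /
  (cos (D * w * sqrt (1 - z ^ 2)) - z / sqrt (1 - z ^ 2) * sin (D * w * sqrt (1 - z ^ 2))).

Definition c_over (D l beta a : R) : R :=
  let w := omegaN a beta in
  let z := xi D l beta a in
  exp (D * w * z) /
  (cosh (D * w * sqrt (z ^ 2 - 1)) - z / sqrt (z ^ 2 - 1) * sinh (D * w * sqrt (z ^ 2 - 1))).

(* Main.v *)
Require Import Defs.
From Stdlib Require Import Reals Lra.
Open Scope R_scope.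


Lemma sqrt_eq (x y : R) : 0 <= y -> x = y * y -> sqrt x = y.
Proof. intros Hy ->. apply (sqrt_Rsqr y Hy). Qed.

Lemma div_le_div (x y d q : R) : 0 < q -> q <= d -> 0 <= x -> x <= y -> x / d <= y / q.
Proof.
  intros Hq Hqd Hx Hxy. unfold Rdiv.
  apply Rmult_le_compat; auto.
  - left; apply Rinv_0_lt_compat; lra.
  - apply Rinv_le_contravar; lra.
Qed.

Lemma my_cos_lb (s : R) : 0 < s < 1 -> 1 - s^2/2 <= cos s.
Proof.
  intros [H0 H1].
  replace (cos s) with (cos (2*(s/2))) by (f_equal; field).
  rewrite cos_2a_sin.
  assert (h1 : sin (s/2) < s/2) by (apply sin_lt_x; lra).
  assert (h2 : 0 <= sin (s/2)).
  { apply sin_ge_0; [lra|]. pose proof PI2_1. lra. }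
  nra.
Qed.

Lemma exp_diff_lb (v : R) : 0 < v -> 2 * v <= exp v - exp (- v).
Proof.
  intros Hv.
  destruct (MVT_cor1 sinh 0 v derivable_sinh Hv) as [c [Hc _]].
  rewrite (pr_nu sinh c _ (derivable_pt_sinh c)), derive_pt_sinh, sinh_0 in Hc.
  assert (Hcosh : 1 <= cosh c).
  { unfold cosh. rewrite exp_Ropp. pose proof (exp_pos c).
    assert (0 <= (exp c - 1)^2) by apply pow2_ge_0.
    apply (Rmult_le_reg_r (2 * exp c)); [lra|].
    field_simplify; [|lra]. nra. }
  assert (sinh v = exp v - exp (-v) - sinh v) by (unfold sinh; field).
  nra.
Qed.
Ltac pos := repeat (apply Rmult_lt_0_compat || apply Rdiv_lt_0_compat || apply Rinv_0_lt_compat); try lra.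
Lemma part1 (D l beta : R) (hD : 0 < D) (hl : 0 < l) (hb : 0 < beta) :
  (D ^ 2 * l * beta < 8 ->
   let a := 4 / (D ^ 2 * beta) in
   a >= l / 2 /\
   c_under D l beta a <= 2 * exp 1 / (1 - D ^ 2 * l * beta / 8) ^ 2).
Proof.
  intros H a. subst a.
  assert (HD2 : 0 < D^2 * beta) by (apply Rmult_lt_0_compat; [apply pow_lt|]; lra).
  split.
  { apply Rle_ge. apply (Rmult_le_reg_r (2 * (D^2*beta))); [lra|].
    field_simplify; lra. }
  set (z := D ^ 2 * l * beta / 8).
  assert (hz0 : 0 < z) by (unfold z; assert (0 < D^2*l*beta) by (apply Rmult_lt_0_compat; [apply Rmult_lt_0_compat; [apply pow_lt|]|]; lra); lra).
  assert (hz1 : z < 1) by (unfold z; lra).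
  assert (hw : D * omegaN (4 / (D ^ 2 * beta)) beta = 1).
  { unfold omegaN. rewrite (sqrt_eq _ (2 / D)).
    - field; lra.
    - left; apply Rdiv_lt_0_compat; lra.
    - field; lra. }
  assert (hx : xi D l beta (4 / (D ^ 2 * beta)) = z).
  { unfold xi, z. rewrite (sqrt_eq _ (D * beta / 2)).
    - field; lra.
    - left; apply Rdiv_lt_0_compat; [apply Rmult_lt_0_compat|]; lra.
    - field; lra. }
  unfold c_under. cbv zeta. rewrite hw, hx, !Rmult_1_l.
  set (s := sqrt (1 - z^2)).
  assert (hs0 : 0 < s) by (apply sqrt_lt_R0; nra).
  assert (hs2 : s * s = 1 - z^2) by (apply sqrt_sqrt; nra).
  assert (hs1 : s < 1) by nra.
  pose proof (my_cos_lb s (conj hs0 hs1)).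
  pose proof (sin_lt_x s hs0).
  assert (z / s * sin s <= z).
  { replace z with (z / s * s) at 2 by (field; lra).
    apply Rmult_le_compat_l; [left; apply Rdiv_lt_0_compat|]; lra. }
  replace (2 * exp 1 / (1 - z) ^ 2) with (exp 1 / ((1 - z)^2 / 2)) by (field; lra).
  apply div_le_div.
  - nra.
  - nra.
  - left; apply exp_pos.
  - left; apply exp_increasing; lra.
Qed.
Lemma part2 (D l beta : R) (hD : 0 < D) (hl : 0 < l) (hb : 0 < beta) :
  (let a := D ^ 2 * l ^ 2 * beta / 16 * (1 - (tanh (D ^ 2 * l * beta / 8)) ^ 2) in
   a >= D ^ 2 * l ^ 2 * beta / 16 * exp (- (D ^ 2 * l * beta / 4)) /\
   c_over D l beta a <= 4 / (D ^ 2 * l * beta) * exp (D ^ 2 * l * beta / 2)).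
Proof.
  intros a. subst a.
  assert (hk : 0 < D^2*l*beta) by (apply Rmult_lt_0_compat; [apply Rmult_lt_0_compat; [apply pow_lt|]|]; lra).
  set (t := D ^ 2 * l * beta / 8).
  assert (ht : 0 < t) by (unfold t; lra).
  replace (D ^ 2 * l * beta / 4) with (t + t) by (unfold t; field).
  replace (D ^ 2 * l * beta / 2) with ((t + t) + (t + t)) by (unfold t; field).
  replace (4 / (D ^ 2 * l * beta)) with (/ (2 * t)) by (unfold t; field; lra).
  replace (D ^ 2 * l ^ 2 * beta / 16) with (t * l / 2) by (unfold t; field).
  rewrite exp_Ropp, !exp_plus.
  set (E := exp t).
  assert (hE : 1 < E) by (unfold E; pose proof (exp_ineq1 t); lra).
  assert (hth : 1 - tanh t ^ 2 = 4 * E^2 / (E^2 + 1)^2).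
  { unfold tanh, sinh, cosh. rewrite exp_Ropp. fold E. field. split; nra. }
  rewrite hth.
  assert (hE2 : 1 < E^2) by nra.
  assert (hE2' : 0 < E^2 + 1) by nra.
  assert (htl : 0 < t * l) by (apply Rmult_lt_0_compat; lra).
  split.
  { apply Rle_ge. apply Rmult_le_compat_l; [lra|].
    apply (Rmult_le_reg_r ((E^2+1)^2 * (E * E))); [nra|].
    field_simplify; [nra|lra|lra]. }
  set (a := t * l / 2 * (4 * E ^ 2 / (E ^ 2 + 1) ^ 2)).
  assert (ha : 0 < a) by (unfold a; apply Rmult_lt_0_compat; [nra| apply Rdiv_lt_0_compat; nra]).
  assert (hw : D * omegaN a beta = t * (2 * E / (E^2 + 1))).
  { unfold omegaN. rewrite (sqrt_eq _ (D * l * beta / 4 * (2 * E / (E^2 + 1)))).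
    - unfold t. field. nra.
    - left. pos.
    - unfold a, t. field. nra. }
  assert (hx : xi D l beta a = (E^2 + 1) / (2 * E)).
  { unfold xi. rewrite (sqrt_eq _ (4 / (D * l) * ((E^2 + 1) / (2 * E)))).
    - field. lra.
    - left. apply Rmult_lt_0_compat; apply Rdiv_lt_0_compat; try nra.
    - unfold a, t. field. repeat split; nra. }
  unfold c_over. cbv zeta. rewrite hw, hx.
  rewrite (sqrt_eq (((E ^ 2 + 1) / (2 * E)) ^ 2 - 1) ((E^2 - 1) / (2 * E))).
  2:{ left; apply Rdiv_lt_0_compat; nra. }
  2:{ field. lra. }
  replace (t * (2 * E / (E ^ 2 + 1)) * ((E ^ 2 + 1) / (2 * E))) with t by (field; nra).
  fold E.
  set (u := t * (2 * E / (E ^ 2 + 1)) * ((E ^ 2 - 1) / (2 * E))).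
  set (v := 2 * t / (E^2 + 1)).
  assert (huv : u = t - v) by (unfold u, v; field; nra).
  set (F := exp u).
  assert (hF : 0 < F) by apply exp_pos.
  assert (hev : exp v = E / F /\ exp (- v) = F / E).
  { assert (hv : v = t - u) by lra.
    rewrite hv, exp_Ropp, Rminus_def, exp_plus, exp_Ropp. fold E F.
    split; field; lra. }
  assert (hden : cosh u - (E ^ 2 + 1) / (2 * E) / ((E ^ 2 - 1) / (2 * E)) * sinh u
                 = E * (exp v - exp (- v)) / (E^2 - 1)).
  { destruct hev as [h1 h2]. rewrite h1, h2. unfold cosh, sinh. rewrite exp_Ropp. fold F.
    field. repeat split; nra. }
  rewrite hden.
  assert (hv0 : 0 < v) by (unfold v; apply Rdiv_lt_0_compat; nra).
  pose proof (exp_diff_lb v hv0).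
  replace (/ (2 * t) * (E * E * (E * E))) with (E / (2 * t / (E * E * E))) by (field; lra).
  apply div_le_div.
  - apply Rdiv_lt_0_compat; nra.
  - apply Rle_trans with (E * (2 * v) / (E^2 - 1)).
    + unfold v. apply (Rmult_le_reg_r ((E * E * E) * (E^2+1) * (E^2-1))).
      { assert (0 < E*E*E) by pos. assert (0 < E^2-1) by lra. pos. }
      field_simplify.
      * assert (0 <= t*E^4) by (apply Rmult_le_pos; [lra| apply pow_le; lra]). lra.
      * split; lra.
      * lra.
    + unfold Rdiv. apply Rmult_le_compat_r; [left; apply Rinv_0_lt_compat; nra|]. nra.
  - left; apply exp_pos.
  - right; reflexivity.
Qed.

Theorem lemma14 (D l beta : R) (hD : 0 < D) (hl : 0 < l) (hb : 0 < beta) :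
  (D ^ 2 * l * beta < 8 ->
   let a := 4 / (D ^ 2 * beta) in
   a >= l / 2 /\
   c_under D l beta a <= 2 * exp 1 / (1 - D ^ 2 * l * beta / 8) ^ 2) /\
  (let a := D ^ 2 * l ^ 2 * beta / 16 * (1 - (tanh (D ^ 2 * l * beta / 8)) ^ 2) in
   a >= D ^ 2 * l ^ 2 * beta / 16 * exp (- (D ^ 2 * l * beta / 4)) /\
   c_over D l beta a <= 4 / (D ^ 2 * l * beta) * exp (D ^ 2 * l * beta / 2)).
Proof. split; [apply part1 | apply part2]; assumption. Qed.
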